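(* Let $(b_n)_{n\ge0}$ be the unique positive solution of the discrete Painlevé I equation $\frac{n}{b_n}=b_{n-1}+b_n+b_{n+1}-\kappa$ for $n\ge1$, with $b_0=0$. For all $c^-<1$ and $c^+>1$ there exists $N\in\mathbb{N}$ such that, for all $n\ge N$, $$c^-\frac{\sqrt n}{\sqrt3}\le b_n\le c^+\frac{\sqrt n}{\sqrt3}.$$ In particular, if $\kappa=4$, $c^-=0.987$ and $c^+=1.025$, this holds with $N=2187$.
   Context: Here $\kappa\in\mathbb{R}$ is fixed. Equivalently, $b_n=a_n^2$, where $(a_n)$ are the coefficients of the three-term recurrence $xp_n=a_{n+1}p_{n+1}+a_np_{n-1}$ (with $a_0=0$ and $a_n>0$) of the orthonormal polynomials $p_n$ with respect to $\nu(dx)\propto e^{-x^4/4+\kappa x^2/2}dx$. *)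

(* Defs.v *)
From Stdlib Require Import Reals Lra Lia.
Open Scope R_scope.

Definition dPI_positive_solution (kappa : R) (b : nat -> R) : Prop :=
  b 0%nat = 0 /\
  (forall n : nat, (1 <= n)%nat -> 0 < b n) /\
  (forall n : nat, (1 <= n)%nat ->
     INR n / b n = b (n - 1)%nat + b n + b (S n) - kappa).

(* Main.v *)
Require Import Defs.
From Stdlib Require Import Reals Lra Lia Psatz.
Open Scope R_scope.

Lemma sqrt_concave (x : R) : 0 <= x -> sqrt x + sqrt (x + 2) <= 2 * sqrt (x + 1).
Proof.
  intro hx.
  pose proof (sqrt_sqrt x hx) as h1.
  pose proof (sqrt_sqrt (x+2) ltac:(lra)) as h2.
  pose proof (sqrt_sqrt (x+1) ltac:(lra)) as h3.
  pose proof (sqrt_pos x). pose proof (sqrt_pos (x+2)). pose proof (sqrt_pos (x+1)).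
  set (a := sqrt x) in *. set (c := sqrt (x+2)) in *. set (d := sqrt (x+1)) in *.
  assert (hac : a * c <= x + 1).
  { assert ((a*c)*(a*c) <= (x+1)*(x+1)) by nra. nra. }
  nra.
Qed.

Lemma sqrt_add_le (a : R) : 0 <= a -> sqrt (1 + a) <= 1 + sqrt a.
Proof.
  intro ha. pose proof (sqrt_sqrt a ha). pose proof (sqrt_sqrt (1+a) ltac:(lra)).
  pose proof (sqrt_pos a). pose proof (sqrt_pos (1+a)). nra.
Qed.

Lemma Rdiv_le_0_compat (x y : R) : 0 <= x -> 0 < y -> 0 <= x / y.
Proof. intros. unfold Rdiv. apply Rmult_le_pos; [lra|]. left; apply Rinv_0_lt_compat; lra. Qed.

Lemma abstract_bound (y : nat -> R) (Dm q th A rho B C a : R) :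
  (forall k, 0 <= y k) ->
  Dm * y 0%nat <= B + y 1%nat + rho ->
  (forall k, Dm * y (S k) <= y k + y (S (S k)) + rho) ->
  (forall k, y k <= C * (1 + sqrt (INR k + a))) ->
  0 <= a -> 0 < Dm -> 0 < q < 1 -> 2 <= q * Dm -> 0 < th < 1 ->
  th + / th <= q * Dm -> 0 < A -> 0 <= rho -> 0 <= B ->
  forall k, y k <= (rho + B / A) / (Dm * (1 - q)) * (1 + A * th ^ k).
Proof.
  intros hy h0 hS hC ha hD hq hqD hth hth2 hA hr hB.
  set (Ks := (rho + B / A) / (Dm * (1 - q))).
  set (c := (rho + B / A) / Dm).
  assert (hBA : 0 <= B / A) by (apply Rdiv_le_0_compat; lra).
  assert (hKs : 0 <= Ks) by (unfold Ks; apply Rdiv_le_0_compat; nra).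
  assert (hc : c = (1 - q) * Ks) by (unfold c, Ks; field; lra).
  set (w := fun (d : R) k => 1 + A * th ^ k + d * sqrt (INR k + a)).
  assert (hpow : forall k, 0 < th ^ k) by (intro; apply pow_lt; lra).
  assert (hw1 : forall d k, 0 <= d -> 1 <= w d k).
  { intros d k hd. unfold w. pose proof (hpow k).
    pose proof (sqrt_pos (INR k + a)). nra. }
  assert (step : forall d K, 0 < d <= 1 -> 0 <= K ->
     (forall k, y k <= K * w d k) -> forall k, y k <= (q * K + c) * w d k).
  { intros d K hd hK hk k.
    assert (hcD : Dm * c = rho + B / A) by (unfold c; field; lra).
    destruct k as [|k].
    - apply Rmult_le_reg_l with Dm; [lra|].
      pose proof (hk 1%nat) as h1.
      assert (hw : w d 1%nat <= 2 * w d 0%nat).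
      { unfold w. simpl INR. rewrite Rplus_0_l.
        replace (1 + a) with (1 + a) by ring.
        pose proof (sqrt_add_le a ha). pose proof (sqrt_pos a).
        rewrite Rmult_1_r. simpl. nra. }
      assert (hw0 : A <= w d 0%nat).
      { unfold w. simpl. pose proof (sqrt_pos (0 + a)). nra. }
      pose proof (hw1 d 0%nat ltac:(lra)).
      assert (K * w d 1%nat <= q * Dm * K * w d 0%nat).
      { assert (K * w d 1%nat <= K * (2 * w d 0%nat)) by (apply Rmult_le_compat_l; lra).
        assert (K * (2 * w d 0%nat) <= K * (q * Dm * w d 0%nat)).
        { apply Rmult_le_compat_l; [lra|]. apply Rmult_le_compat_r; lra. }
        lra. }
      assert (rho + B <= (rho + B / A) * w d 0%nat).
      { assert (B = (B / A) * A) by (field; lra). nra. }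
      nra.
    - apply Rmult_le_reg_l with Dm; [lra|].
      pose proof (hS k) as hs. pose proof (hk k). pose proof (hk (S (S k))).
      assert (hw : w d k + w d (S (S k)) <= q * Dm * w d (S k)).
      { unfold w. rewrite !S_INR.
        pose proof (sqrt_concave (INR k + a) ltac:(pose proof (pos_INR k); lra)) as hcc.
        replace (INR k + 1 + 1 + a) with (INR k + a + 2) by ring.
        replace (INR k + 1 + a) with (INR k + a + 1) by ring.
        assert (th ^ k + th ^ S (S k) <= q * Dm * th ^ S k).
        { simpl. pose proof (hpow k).
          assert (th ^ k * (1 + th * th) = th * th ^ k * (th + / th)) by (field; lra).
          assert (th * th ^ k * (th + / th) <= th * th ^ k * (q * Dm)).
          { apply Rmult_le_compat_l; [|lra]. nra. }
          nra. }
        pose proof (sqrt_pos (INR k + a + 1)).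
        assert (A * (th ^ k + th ^ S (S k)) <= A * (q * Dm * th ^ S k)) by
          (apply Rmult_le_compat_l; lra).
        assert (d * (sqrt (INR k + a) + sqrt (INR k + a + 2)) <= d * (q * Dm * sqrt (INR k + a + 1))).
        { apply Rmult_le_compat_l; [lra|]. nra. }
        nra. }
      pose proof (hw1 d (S k) ltac:(lra)).
      assert (K * (w d k + w d (S (S k))) <= K * (q * Dm * w d (S k))) by
        (apply Rmult_le_compat_l; lra).
      assert (rho <= (rho + B / A) * w d (S k)) by nra.
      nra. }
  assert (iter : forall d, 0 < d <= 1 -> forall j k,
     y k <= (Ks + q ^ j * (Rmax 0 C / d)) * w d k).
  { intros d hd j. induction j as [|j IH].
    - intro k. simpl. rewrite Rmult_1_l.
      pose proof (hC k). pose proof (sqrt_pos (INR k + a)).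
      pose proof (Rmax_r 0 C). pose proof (Rmax_l 0 C).
      assert (hw : d * (1 + sqrt (INR k + a)) <= w d k).
      { unfold w. pose proof (hpow k). nra. }
      assert (C * (1 + sqrt (INR k + a)) <= Rmax 0 C / d * (d * (1 + sqrt (INR k + a)))).
      { replace (Rmax 0 C / d * (d * (1 + sqrt (INR k + a)))) with
          (Rmax 0 C * (1 + sqrt (INR k + a))) by (field; lra). nra. }
      assert (0 <= Rmax 0 C / d) by (apply Rdiv_le_0_compat; lra).
      assert (Rmax 0 C / d * (d * (1 + sqrt (INR k + a))) <= Rmax 0 C / d * w d k)
        by (apply Rmult_le_compat_l; lra).
      assert (Rmax 0 C / d * w d k <= (Ks + Rmax 0 C / d) * w d k).
      { pose proof (hw1 d k ltac:(lra)). nra. }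
      lra.
    - intro k.
      assert (0 <= Rmax 0 C / d) by (apply Rdiv_le_0_compat; [pose proof (Rmax_l 0 C)|]; lra).
      assert (0 <= q ^ j) by (apply pow_le; lra).
      assert (0 <= q ^ j * (Rmax 0 C / d)) by (apply Rmult_le_pos; lra).
      pose proof (step d (Ks + q ^ j * (Rmax 0 C / d)) hd ltac:(lra) IH k) as hh.
      replace (q * (Ks + q ^ j * (Rmax 0 C / d)) + c) with
        (Ks + q ^ S j * (Rmax 0 C / d)) in hh by (rewrite hc; simpl; ring).
      exact hh. }
  intro k.
  set (W := 1 + A * th ^ k).
  set (sq := sqrt (INR k + a)).
  assert (hsq : 0 <= sq) by apply sqrt_pos.
  assert (hW : 1 <= W) by (unfold W; pose proof (hpow k); nra).
  apply Rnot_lt_le. intro hlt.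
  set (g := y k - Ks * W).
  assert (hg : 0 < g) by (unfold g; lra).
  set (d := Rmin 1 (g / (2 * (Ks + 1) * (sq + 1)))).
  assert (hd0 : 0 < g / (2 * (Ks + 1) * (sq + 1))).
  { apply Rdiv_lt_0_compat; nra. }
  assert (hd : 0 < d <= 1).
  { unfold d. split; [apply Rmin_glb_lt; lra | apply Rmin_l]. }
  assert (hd2 : d * (2 * (Ks + 1) * (sq + 1)) <= g).
  { assert (d <= g / (2 * (Ks + 1) * (sq + 1))) by apply Rmin_r.
    assert (g / (2 * (Ks + 1) * (sq + 1)) * (2 * (Ks + 1) * (sq + 1)) = g) by (field; nra).
    assert (0 < 2 * (Ks + 1) * (sq + 1)) by nra. nra. }
  set (eps := Rmin 1 (g / (2 * (W + 1)))).
  assert (heps0 : 0 < eps).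
  { unfold eps. apply Rmin_glb_lt; [lra|]. apply Rdiv_lt_0_compat; lra. }
  assert (heps1 : eps <= 1) by apply Rmin_l.
  assert (heps2 : eps * (2 * (W + 1)) <= g).
  { assert (eps <= g / (2 * (W + 1))) by apply Rmin_r.
    assert (g / (2 * (W + 1)) * (2 * (W + 1)) = g) by (field; lra). nra. }
  set (K0 := Rmax 0 C / d).
  assert (hK0 : 0 <= K0) by (apply Rdiv_le_0_compat; [pose proof (Rmax_l 0 C)|]; lra).
  destruct (pow_lt_1_zero q ltac:(rewrite Rabs_right; lra) (eps / (K0 + 1))
    ltac:(apply Rdiv_lt_0_compat; lra)) as [j hj].
  specialize (hj j (le_n j)). rewrite Rabs_right in hj by (apply Rle_ge, pow_le; lra).
  assert (hqj : q ^ j * K0 < eps).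
  { assert (q ^ j * (K0 + 1) < eps).
    { assert (eps / (K0 + 1) * (K0 + 1) = eps) by (field; lra).
      apply Rmult_lt_compat_r with (r := K0 + 1) in hj; lra. }
    pose proof (pow_le q j ltac:(lra)). nra. }
  pose proof (iter d hd j k) as hit. fold K0 in hit.
  assert (hwk : w d k = W + d * sq) by (unfold w, W, sq; ring).
  rewrite hwk in hit.
  pose proof (pow_le q j ltac:(lra)).
  assert ((Ks + q ^ j * K0) * (W + d * sq) < (Ks + eps) * (W + d * sq)).
  { apply Rmult_lt_compat_r; nra. }
  assert ((Ks + eps) * (W + d * sq) <= Ks * W + g * (1/2) + g * (1/2) - 0).
  { assert ((Ks + eps) * (d * sq) <= (Ks + 1) * (d * sq)) by (apply Rmult_le_compat_r; nra).
    assert ((Ks + 1) * (d * sq) <= g * (1/2)).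
    { nra. }
    assert (eps * W <= g * (1/2)) by nra.
    nra. }
  assert (y k < Ks * W + g) by lra.
  unfold g in *. lra.
Qed.

Lemma key_ineq (kappa : R) (b f : nat -> R) (n : nat) (Dm rho : R) :
  0 < b n -> 0 < f n ->
  INR n / b n = b (n-1)%nat + b n + b (S n) - kappa ->
  (Dm - 1) * (b n * f n) <= INR n ->
  Rabs (f (n-1)%nat + f n + f (S n) - kappa - INR n / f n) <= rho ->
  Dm * Rabs (b n - f n) <= Rabs (b (n-1)%nat - f (n-1)%nat) + Rabs (b (S n) - f (S n)) + rho.
Proof.
  intros hb hf heq hD hr.
  set (e := b n - f n).
  set (r := f (n-1)%nat + f n + f (S n) - kappa - INR n / f n) in *.
  set (X := INR n / (b n * f n)).
  assert (hid : - e * (1 + X) = (b (n-1)%nat - f (n-1)%nat) + (b (S n) - f (S n)) + r).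
  { assert (hh : e * X = - (INR n / b n - INR n / f n)) by (unfold e, X; field; lra).
    replace (- e * (1 + X)) with (- e - e * X) by ring. rewrite hh, heq. unfold r, e. ring. }
  assert (hX : Dm - 1 <= X).
  { unfold X. apply Rmult_le_reg_r with (b n * f n); [nra|].
    unfold Rdiv. rewrite Rmult_assoc, Rinv_l by nra. lra. }
  assert (hX0 : 0 <= X).
  { unfold X. unfold Rdiv. apply Rmult_le_pos; [apply pos_INR|]. left; apply Rinv_0_lt_compat; nra. }
  assert (Rabs e * (1 + X) = Rabs ((b (n-1)%nat - f (n-1)%nat) + (b (S n) - f (S n)) + r)).
  { rewrite <- hid. rewrite Rabs_mult, Rabs_Ropp. rewrite (Rabs_right (1 + X)) by lra. ring. }
  pose proof (Rabs_triang (b (n-1)%nat - f (n-1)%nat + (b (S n) - f (S n))) r).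
  pose proof (Rabs_triang (b (n-1)%nat - f (n-1)%nat) (b (S n) - f (S n))).
  pose proof (Rabs_pos e).
  assert (Dm * Rabs e <= (1 + X) * Rabs e) by nra.
  lra.
Qed.

Lemma crude_upper (kappa : R) (b : nat -> R) (n : nat) :
  dPI_positive_solution kappa b -> (1 <= n)%nat -> b n <= Rabs kappa + sqrt (INR n).
Proof.
  intros [h0 [hpos heq]] hn.
  pose proof (hpos n hn) as hb. pose proof (heq n hn) as he.
  assert (hprev : 0 <= b (n-1)%nat).
  { destruct n as [|m]; [lia|]. destruct m as [|m].
    - simpl. rewrite h0. lra.
    - left. apply hpos. lia. }
  assert (hnext : 0 < b (S n)) by (apply hpos; lia).
  assert (hn' : INR n = b n * (b (n-1)%nat + b n + b (S n) - kappa)).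
  { rewrite <- he. field. lra. }
  pose proof (sqrt_sqrt (INR n) (pos_INR n)). pose proof (sqrt_pos (INR n)).
  pose proof (Rle_abs kappa).
  apply Rnot_lt_le. intro Hc.
  assert (b n * (b n - Rabs kappa) > (Rabs kappa + sqrt (INR n)) * sqrt (INR n)).
  { pose proof (Rabs_pos kappa). apply Rmult_gt_0_lt_compat; nra. }
  pose proof (Rabs_pos kappa).
  nra.
Qed.

Lemma tail_bound (kappa : R) (b f : nat -> R) (N0 : nat) (Dm rho B C q th A : R) :
  dPI_positive_solution kappa b ->
  (1 <= N0)%nat ->
  (forall n, (N0 <= n)%nat -> 0 < f n) ->
  (forall n, (N0 <= n)%nat -> (Dm - 1) * (b n * f n) <= INR n) ->
  (forall n, (N0 <= n)%nat -> Rabs (f (n-1)%nat + f n + f (S n) - kappa - INR n / f n) <= rho) ->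
  Rabs (b (N0 - 1)%nat - f (N0 - 1)%nat) <= B ->
  (forall n, (N0 <= n)%nat -> Rabs (b n - f n) <= C * (1 + sqrt (INR n))) ->
  0 < Dm -> 0 < q < 1 -> 2 <= q * Dm -> 0 < th < 1 ->
  th + / th <= q * Dm -> 0 < A -> 0 <= rho -> 0 <= B ->
  forall n, (N0 <= n)%nat ->
    Rabs (b n - f n) <= (rho + B / A) / (Dm * (1 - q)) * (1 + A * th ^ (n - N0)).
Proof.
  intros hsol hN0 hf hD hr hB hC hDm hq hqD hth hth2 hA hrho hB0 n hn.
  destruct hsol as [hb0 [hpos heq]].
  set (y := fun k => Rabs (b (N0 + k)%nat - f (N0 + k)%nat)).
  assert (hkey : forall m, (N0 <= m)%nat ->
    Dm * Rabs (b m - f m) <= Rabs (b (m-1)%nat - f (m-1)%nat) + Rabs (b (S m) - f (S m)) + rho).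
  { intros m hm. apply key_ineq with kappa.
    - apply hpos; lia.
    - apply hf; lia.
    - apply heq; lia.
    - apply hD; lia.
    - apply hr; lia. }
  pose proof (abstract_bound y Dm q th A rho B C (INR N0)) as hab.
  replace n with (N0 + (n - N0))%nat by lia.
  replace (N0 + (n - N0) - N0)%nat with (n - N0)%nat by lia.
  apply hab; clear hab; auto.
  - intro k. unfold y. apply Rabs_pos.
  - unfold y. pose proof (hkey N0 (le_n N0)) as h.
    replace (N0 + 0)%nat with N0 by lia. replace (N0 + 1)%nat with (S N0) by lia. lra.
  - intro k. unfold y. pose proof (hkey (N0 + S k)%nat ltac:(lia)) as h.
    replace (N0 + S k - 1)%nat with (N0 + k)%nat in h by lia.
    replace (S (N0 + S k)) with (N0 + S (S k))%nat in h by lia. exact h.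
  - intro k. unfold y. rewrite (Rplus_comm (INR k)), <- plus_INR. apply hC. lia.
  - apply pos_INR.
Qed.

Lemma sqrt3_bounds : 1.73 <= sqrt 3 <= 1.7321 /\ sqrt 3 * sqrt 3 = 3.
Proof.
  pose proof (sqrt_sqrt 3 ltac:(lra)). pose proof (sqrt_pos 3).
  split; [split|]; [nra|nra|lra].
Qed.

Lemma sqrt_step (x : R) : 0 <= x -> 0 <= sqrt (x + 1) - sqrt x <= 1.
Proof.
  intro hx. pose proof (sqrt_sqrt x hx). pose proof (sqrt_sqrt (x+1) ltac:(lra)).
  pose proof (sqrt_pos x). pose proof (sqrt_pos (x+1)).
  split; nra.
Qed.

Lemma INR_pred (n : nat) : (1 <= n)%nat -> INR (n - 1) = INR n - 1.
Proof. intro h. rewrite minus_INR by lia. simpl. ring. Qed.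

Lemma abs_le_inv (x a : R) : Rabs x <= a -> - a <= x <= a.
Proof. intro h. pose proof (Rle_abs x). pose proof (Rle_abs (-x)). rewrite Rabs_Ropp in *. lra. Qed.

Lemma pow_le_one (x : R) (n : nat) : 0 <= x <= 1 -> x ^ n <= 1.
Proof.
  intro h. induction n as [|n IH]; simpl; [lra|].
  pose proof (pow_le x n ltac:(lra)). nra.
Qed.

Lemma pow_decr (x : R) (m n : nat) : 0 <= x <= 1 -> (m <= n)%nat -> x ^ n <= x ^ m.
Proof.
  intros h hmn. replace n with (m + (n - m))%nat by lia. rewrite pow_add.
  pose proof (pow_le_one x (n - m) h). pose proof (pow_le x m ltac:(lra)). nra.
Qed.

Lemma part1 (kappa : R) (b : nat -> R) :
  dPI_positive_solution kappa b ->
  (forall cm cp : R, cm < 1 -> 1 < cp ->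
     exists N : nat, forall n : nat, (N <= n)%nat ->
       cm * (sqrt (INR n) / sqrt 3) <= b n /\
       b n <= cp * (sqrt (INR n) / sqrt 3)).
Proof.
  intros hsol cm cp hcm hcp.
  destruct sqrt3_bounds as [[r3l r3u] r3sq].
  set (r3 := sqrt 3) in *.
  set (f := fun n : nat => sqrt (INR n) / r3).
  destruct (INR_archimed 1 (49 * kappa * kappa + 3) ltac:(lra)) as [N0 hN0].
  rewrite Rmult_1_r in hN0.
  assert (hN0' : (3 <= N0)%nat).
  { apply INR_le. simpl. nra. }
  set (K := (Rabs kappa + 1 + Rabs (b (N0 - 1)%nat - f (N0 - 1)%nat) / 1) / (5/2 * (1 - 5/6))).
  assert (main : forall n, (N0 <= n)%nat ->
    Rabs (b n - f n) <= K * (1 + 1 * (3/4) ^ (n - N0))).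
  { apply (tail_bound kappa b f N0 (5/2) (Rabs kappa + 1) _ (Rabs kappa + 2)); auto;
      try lra.
    - lia.
    - intros n hn. unfold f. apply Rdiv_lt_0_compat; [|lra].
      apply sqrt_lt_R0. apply lt_0_INR. lia.
    - intros n hn. unfold f.
      pose proof (crude_upper kappa b n hsol ltac:(lia)) as hup.
      destruct hsol as [_ [hpos _]]. pose proof (hpos n ltac:(lia)) as hbp.
      set (t := sqrt (INR n)) in *.
      assert (htt : t * t = INR n) by (apply sqrt_sqrt, pos_INR).
      assert (ht0 : 0 <= t) by apply sqrt_pos.
      assert (hn7 : 7 * Rabs kappa <= t).
      { assert (INR N0 <= INR n) by (apply le_INR; lia).
        pose proof (Rabs_pos kappa).
        assert (Rabs kappa * Rabs kappa = kappa * kappa) by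
          (rewrite <- Rabs_mult; apply Rabs_right; nra).
        nra. }
      assert (b n * (t / r3) <= (Rabs kappa + t) * (t / r3)).
      { apply Rmult_le_compat_r; [apply Rdiv_le_0_compat; lra|lra]. }
      assert ((5/2 - 1) * ((Rabs kappa + t) * (t / r3)) <= INR n).
      { rewrite <- htt. apply Rmult_le_reg_r with r3; [lra|].
        replace ((5 / 2 - 1) * ((Rabs kappa + t) * (t / r3)) * r3) with
          (3/2 * (Rabs kappa + t) * t) by (field; lra).
        pose proof (Rabs_pos kappa). nra. }
      assert (0 <= t / r3) by (apply Rdiv_le_0_compat; lra).
      nra.
    - intros n hn. unfold f.
      assert (hn1 : INR (n - 1) = INR n - 1) by (apply INR_pred; lia).
      rewrite hn1, S_INR.
      set (x := INR n - 1).
      assert (hx : 0 <= x) by (unfold x; assert (1 <= INR n) by (apply (le_INR 1); lia); lra).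
      replace (INR n) with (x + 1) by (unfold x; ring).
      pose proof (sqrt_concave x hx) as hc.
      pose proof (sqrt_step x hx) as hs1.
      pose proof (sqrt_step (x + 1) ltac:(lra)) as hs2.
      replace (x + 1 + 1) with (x + 2) in * by ring.
      assert (htt : sqrt (x+1) * sqrt (x+1) = x + 1) by (apply sqrt_sqrt; lra).
      assert (ht0 : 0 < sqrt (x+1)) by (apply sqrt_lt_R0; lra).
      assert (hid : sqrt x / r3 + sqrt (x + 1) / r3 + sqrt (x + 2) / r3 - kappa -
                (x + 1) / (sqrt (x + 1) / r3) =
              (sqrt x + sqrt (x + 2) - 2 * sqrt (x + 1)) / r3 - kappa).
      { set (s := sqrt (x + 1)) in *.
        assert (h1 : (x + 1) / (s / r3) = s * r3) by (rewrite <- htt; field; lra).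
        rewrite h1. replace (s * r3) with ((r3 * r3) * s / r3) by (field; lra).
        rewrite r3sq. field. lra. }
      rewrite hid.
      set (D := sqrt x + sqrt (x + 2) - 2 * sqrt (x + 1)).
      assert (-1 <= D / r3 <= 0).
      { split.
        - apply Rmult_le_reg_r with r3; [lra|].
          unfold Rdiv. rewrite Rmult_assoc, Rinv_l by lra. unfold D. nra.
        - apply Rmult_le_reg_r with r3; [lra|].
          unfold Rdiv. rewrite Rmult_assoc, Rinv_l by lra. unfold D. lra. }
      apply Rabs_le. pose proof (Rle_abs kappa). pose proof (Rle_abs (-kappa)).
      rewrite Rabs_Ropp in *. lra.
    - intros n hn. unfold f.
      pose proof (crude_upper kappa b n hsol ltac:(lia)) as hup.
      destruct hsol as [_ [hpos _]]. pose proof (hpos n ltac:(lia)) as hbp.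
      assert (0 <= sqrt (INR n) / r3) by (apply Rdiv_le_0_compat; [apply sqrt_pos|lra]).
      assert (sqrt (INR n) / r3 <= sqrt (INR n)).
      { apply Rmult_le_reg_r with r3; [lra|].
        unfold Rdiv. rewrite Rmult_assoc, Rinv_l by lra. pose proof (sqrt_pos (INR n)). nra. }
      apply Rabs_le. pose proof (Rabs_pos kappa). pose proof (sqrt_pos (INR n)). split; nra.
    - pose proof (Rabs_pos kappa); lra.
    - apply Rabs_pos. }
  assert (hK : 0 <= K).
  { unfold K. apply Rdiv_le_0_compat; [|lra].
    pose proof (Rabs_pos kappa). pose proof (Rabs_pos (b (N0 - 1)%nat - f (N0 - 1)%nat)). lra. }
  set (m := Rmin (1 - cm) (cp - 1)).
  assert (hm : 0 < m) by (unfold m; apply Rmin_glb_lt; lra).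
  assert (hm1 : m <= 1 - cm) by apply Rmin_l.
  assert (hm2 : m <= cp - 1) by apply Rmin_r.
  destruct (INR_archimed 1 (3 * ((2 * K / m) * (2 * K / m))) ltac:(lra)) as [N1 hN1].
  rewrite Rmult_1_r in hN1.
  exists (Nat.max N0 N1). intros n hn.
  pose proof (main n ltac:(lia)) as hmn.
  assert (hp : (3/4) ^ (n - N0) <= 1) by (apply pow_le_one; lra).
  assert (hp0 : 0 <= (3/4) ^ (n - N0)) by (apply pow_le; lra).
  assert (he : Rabs (b n - f n) <= 2 * K) by nra.
  apply abs_le_inv in he. clear hmn.
  unfold f in he.
  set (t := sqrt (INR n)) in *.
  assert (htt : t * t = INR n) by (apply sqrt_sqrt, pos_INR).
  assert (ht0 : 0 <= t) by apply sqrt_pos.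
  assert (hnN1 : INR N1 <= INR n) by (apply le_INR; lia).
  set (sv := t / r3) in *.
  assert (hsv : sv * sv = INR n / 3).
  { unfold sv. replace (t / r3 * (t / r3)) with ((t * t) / (r3 * r3)) by (field; lra). rewrite htt, r3sq. reflexivity. }
  assert (hsv0 : 0 <= sv) by (unfold sv; apply Rdiv_le_0_compat; lra).
  set (z := 2 * K / m) in *.
  assert (hz : 0 <= z) by (unfold z; apply Rdiv_le_0_compat; lra).
  assert (hzs : z <= sv) by nra.
  assert (2 * K <= m * sv).
  { replace (2 * K) with (m * z) by (unfold z; field; lra). nra. }
  split; nra.
Qed.

Lemma diff_sq (x y d : R) : 0 < x + y -> x * x - y * y = d -> x - y = d / (x + y).
Proof. intros h e. rewrite <- e. field. lra. Qed.

Lemma div_le_k (k X X0 : R) : 0 <= k -> 0 < X0 -> X0 <= X -> k / X <= k / X0.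
Proof.
  intros hk h0 h. unfold Rdiv. apply Rmult_le_compat_l; [lra|].
  apply Rinv_le_contravar; lra.
Qed.

Lemma vfacts (n : nat) : sqrt (INR n) / sqrt 3 * (sqrt (INR n) / sqrt 3) = INR n / 3
  /\ 0 <= sqrt (INR n) / sqrt 3.
Proof.
  destruct sqrt3_bounds as [[? ?] r3sq].
  split.
  - replace (sqrt (INR n) / sqrt 3 * (sqrt (INR n) / sqrt 3)) with
      (sqrt (INR n) * sqrt (INR n) / (sqrt 3 * sqrt 3)) by (field; lra).
    rewrite r3sq, sqrt_sqrt by apply pos_INR. reflexivity.
  - apply Rdiv_le_0_compat; [apply sqrt_pos|lra].
Qed.

Lemma INR1500 (n : nat) : (1500 <= n)%nat -> 1500 <= INR n.
Proof.
  intro h. apply le_INR in h. rewrite INR_IZR_INZ in h. simpl in h. exact h.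
Qed.

Lemma INR2187 (n : nat) : (2187 <= n)%nat -> 2187 <= INR n.
Proof.
  intro h. apply le_INR in h. rewrite INR_IZR_INZ in h. simpl in h. exact h.
Qed.

Lemma sq_lower (x c : R) : 0 <= x -> 0 <= c -> c * c <= x * x -> c <= x.
Proof.
  intros hx hc h. apply Rnot_lt_le. intro hlt.
  assert (x * x < c * c) by (apply Rmult_le_0_lt_compat; lra). lra.
Qed.

Definition vv (n : nat) : R := sqrt (INR n) / sqrt 3.
Definition F (x : R) : R := x + 2/3 + (2/9) / x.

Lemma residual_bound (n : nat) : (1500 <= n)%nat ->
  Rabs (F (vv (n-1)%nat) + F (vv n) + F (vv (S n)) - 4 - INR n / F (vv n)) <= 17 / 1000000.
Proof.
  intro hn.
  pose proof (INR1500 n hn) as hN.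
  destruct (vfacts (n-1)) as [hu hu0]. destruct (vfacts n) as [hv hv0].
  destruct (vfacts (S n)) as [hw hw0].
  rewrite INR_pred in hu, hu0 by lia. rewrite S_INR in hw, hw0.
  unfold F, vv. rewrite INR_pred by lia. rewrite S_INR.
  set (u := sqrt (INR n - 1) / sqrt 3) in *.
  set (v := sqrt (INR n) / sqrt 3) in *.
  set (w := sqrt (INR n + 1) / sqrt 3) in *.
  assert (hu1 : 22.3 <= u).
  { apply sq_lower; lra. }
  assert (hv1 : 22.36 <= v).
  { apply sq_lower; lra. }
  assert (hw1 : 22.36 <= w).
  { apply sq_lower; lra. }
  assert (hwv : w - v = (1/3) / (w + v)) by (apply diff_sq; nra).
  assert (hvu : v - u = (1/3) / (v + u)) by (apply diff_sq; nra).
  assert (huw : u - w = (-2/3) / (u + w)) by (apply diff_sq; nra).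
  assert (hid : u + 2/3 + 2/9/u + (v + 2/3 + 2/9/v) + (w + 2/3 + 2/9/w) - 4 -
     INR n / (v + 2/3 + 2/9/v) =
     (u + w - 2 * v) + 2/9 * (1/u + 1/w - 2/v) + 12 / (9 * v * (9 * (v * v) + 6 * v + 2))).
  { replace (INR n) with (3 * (v * v)) by lra. field. repeat split; nra. }
  rewrite hid. clear hid.
  set (P1 := u + w - 2 * v).
  set (P2 := 1/u + 1/w - 2/v).
  set (P3 := 12 / (9 * v * (9 * (v * v) + 6 * v + 2))).
  assert (hP1a : P1 <= 0).
  { unfold P1. replace (u + w - 2 * v) with ((w - v) - (v - u)) by ring.
    rewrite hwv, hvu. assert ((1/3)/(w+v) <= (1/3)/(v+u)) by (apply div_le_k; nra). lra. }
  assert (hP1b : - (3 / 1000000) <= P1).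
  { assert (P1 = - (2/9) / ((w + v) * (v + u) * (u + w))).
    { unfold P1. replace (u + w - 2 * v) with ((w - v) - (v - u)) by ring.
      rewrite hwv, hvu.
      replace ((1/3)/(w+v) - (1/3)/(v+u)) with ((1/3) * (u - w) / ((w + v) * (v + u)))
        by (field; nra).
      rewrite huw. field. nra. }
    assert ((2/9) / ((w + v) * (v + u) * (u + w)) <= (2/9) / 88000).
    { apply div_le_k; [lra|lra|].
      assert (44.6 <= w + v) by lra. assert (44.6 <= v + u) by lra. assert (44.6 <= u + w) by lra.
      assert (44.6 * 44.6 <= (w + v) * (v + u)) by nra. nra. }
    lra. }
  assert (hP2 : 0 <= P2 <= 152 / 10000000).
  { assert (e1 : 1/u - 1/v = (v - u) / (u * v)) by (field; nra).
    assert (e2 : 1/v - 1/w = (w - v) / (v * w)) by (field; nra).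
    assert (hP2e : P2 = (1/u - 1/v) - (1/v - 1/w)). { unfold P2. lra. }
    assert (hvu0 : 0 <= w - v) by (rewrite hwv; apply Rdiv_le_0_compat; lra).
    assert (hge : w - v <= v - u) by (unfold P1 in hP1a; lra).
    assert (h2 : 0 <= (w - v) / (v * w)) by (apply Rdiv_le_0_compat; nra).
    assert (h3 : (w - v) / (v * w) <= (v - u) / (u * v)).
    { apply Rle_trans with ((v - u) / (v * w)).
      - unfold Rdiv. apply Rmult_le_compat_r; [left; apply Rinv_0_lt_compat; nra|lra].
      - apply div_le_k; nra. }
    assert (h4 : (v - u) / (u * v) <= 152 / 10000000).
    { rewrite hvu. replace ((1/3)/(v+u)/(u*v)) with ((1/3) / ((v + u) * (u * v))) by (field; nra).
      apply Rle_trans with ((1/3) / 22000); [|lra].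
      apply div_le_k; [lra|lra|].
      assert (44.6 <= v + u) by lra. assert (22.3 * 22.3 <= u * v) by nra. nra. }
    split; lra. }
  assert (hP3 : 0 <= P3 <= 134 / 10000000).
  { unfold P3. split.
    - apply Rdiv_le_0_compat; [lra|]. nra.
    - apply Rle_trans with (12 / (9 * 22.36 * (9 * 500 + 6 * 22.36 + 2))); [|lra].
      apply div_le_k; [lra|lra|]. nra. }
  apply Rabs_le. lra.
Qed.

Lemma F_facts (v : R) : 22.3 <= v -> v < F v <= v + 68 / 100.
Proof.
  intro h. unfold F.
  assert (0 < (2/9)/v) by (apply Rdiv_lt_0_compat; lra).
  assert ((2/9)/v <= (2/9)/22.3) by (apply div_le_k; lra).
  split; lra.
Qed.

Lemma t_vv (n : nat) : sqrt (INR n) <= 1.7321 * vv n /\ vv n <= sqrt (INR n).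
Proof.
  destruct sqrt3_bounds as [[h1 h2] h3]. unfold vv.
  pose proof (sqrt_pos (INR n)).
  assert (e : sqrt (INR n) = sqrt 3 * (sqrt (INR n) / sqrt 3)) by (field; lra).
  assert (0 <= sqrt (INR n) / sqrt 3) by (apply Rdiv_le_0_compat; lra).
  set (s := sqrt (INR n) / sqrt 3) in *. rewrite e.
  split; nra.
Qed.

Lemma vv_low (n : nat) : (1500 <= n)%nat -> 22.36 <= vv n.
Proof.
  intro hn. pose proof (INR1500 n hn). destruct (vfacts n) as [h1 h2].
  apply sq_lower; [exact h2|lra|]. unfold vv. lra.
Qed.

Lemma part2 (b : nat -> R) : dPI_positive_solution 4 b ->
     forall n : nat, (2187 <= n)%nat ->
       (987 / 1000) * (sqrt (INR n) / sqrt 3) <= b n /\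
       b n <= (1025 / 1000) * (sqrt (INR n) / sqrt 3).
Proof.
  intros hsol.
  set (f := fun n => F (vv n)).
  assert (main : forall n, (1500 <= n)%nat ->
    Rabs (b n - f n) <= (17/1000000 + 100 / 1000000000) / (5/2 * (1 - 5/6)) *
       (1 + 1000000000 * (3/4) ^ (n - 1500))).
  { apply (tail_bound 4 b f 1500 (5/2) (17/1000000) 100 6 (5/6) (3/4) 1000000000); auto;
      try lra.
    - lia.
    - intros n hn. unfold f. pose proof (vv_low n hn). pose proof (F_facts (vv n)). lra.
    - intros n hn. unfold f.
      pose proof (crude_upper 4 b n hsol ltac:(lia)) as hup.
      rewrite Rabs_right in hup by lra.
      destruct hsol as [_ [hpos _]]. pose proof (hpos n ltac:(lia)) as hbp.
      pose proof (vv_low n hn) as hv. pose proof (F_facts (vv n) ltac:(lra)) as hF.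
      destruct (t_vv n) as [ht _].
      destruct (vfacts n) as [hsq _]. fold (vv n) in hsq.
      set (v := vv n) in *. set (Fv := F v) in *.
      assert (b n * Fv <= (4 + 1.7321 * v) * (v + 68/100)) by nra.
      nra.
    - intros n hn. unfold f. apply residual_bound. exact hn.
    - unfold f. simpl (1500 - 1)%nat.
      pose proof (crude_upper 4 b 1499 hsol ltac:(lia)) as hup.
      rewrite Rabs_right in hup by lra.
      destruct hsol as [_ [hpos _]]. pose proof (hpos 1499%nat ltac:(lia)) as hbp.
      destruct (t_vv 1499) as [_ hvt].
      assert (hv : 22.3 <= vv 1499).
      { destruct (vfacts 1499) as [h1 h2]. apply sq_lower; [exact h2|lra|]. unfold vv.
        rewrite h1. rewrite INR_IZR_INZ. simpl. lra. }
      pose proof (F_facts _ hv).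
      assert (sqrt (INR 1499) <= 39).
      { apply sq_lower; [lra|apply sqrt_pos|]. rewrite sqrt_sqrt by apply pos_INR.
        rewrite INR_IZR_INZ. simpl. lra. }
      apply Rabs_le. lra.
    - intros n hn. unfold f.
      pose proof (crude_upper 4 b n hsol ltac:(lia)) as hup.
      rewrite Rabs_right in hup by lra.
      destruct hsol as [_ [hpos _]]. pose proof (hpos n ltac:(lia)) as hbp.
      pose proof (vv_low n hn) as hv. pose proof (F_facts (vv n) ltac:(lra)) as hF.
      destruct (t_vv n) as [_ hvt].
      apply Rabs_le. lra. }
  intros n hn.
  pose proof (main n ltac:(lia)) as hm.
  assert (hp : (3/4) ^ (n - 1500) <= (1/10) ^ 68).
  { apply Rle_trans with ((3/4) ^ (10 * 68)).
    - apply pow_decr; [lra|lia].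
    - rewrite pow_mult. apply pow_incr. split; [apply pow_le; lra|]. simpl. lra. }
  assert (hsmall : 1000000000 * (1/10) ^ 68 <= 1/1000) by (simpl; lra).
  assert (hp0 : 0 <= (3/4) ^ (n - 1500)) by (apply pow_le; lra).
  assert (hE : Rabs (b n - f n) <= 5 / 100000) by nra.
  apply abs_le_inv in hE. clear hm.
  unfold f in hE. fold (vv n).
  assert (hv : 27 <= vv n).
  { pose proof (INR2187 n hn). destruct (vfacts n) as [h1 h2].
    apply sq_lower; [exact h2|lra|]. unfold vv. lra. }
  unfold F in hE.
  assert ((2/9) / vv n <= (2/9) / 27) by (apply div_le_k; lra).
  assert (0 < (2/9) / vv n) by (apply Rdiv_lt_0_compat; lra).
  split; lra.
Qed.

Theorem mainTheorem10 (kappa : R) (b : nat -> R) :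
  dPI_positive_solution kappa b ->
  (forall cm cp : R, cm < 1 -> 1 < cp ->
     exists N : nat, forall n : nat, (N <= n)%nat ->
       cm * (sqrt (INR n) / sqrt 3) <= b n /\
       b n <= cp * (sqrt (INR n) / sqrt 3)) /\
  (kappa = 4 ->
     forall n : nat, (2187 <= n)%nat ->
       (987 / 1000) * (sqrt (INR n) / sqrt 3) <= b n /\
       b n <= (1025 / 1000) * (sqrt (INR n) / sqrt 3)).
Proof.
  intro hsol. split.
  - exact (part1 kappa b hsol).
  - intro hk. subst kappa. exact (part2 b hsol).
Qed.
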